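(* Let $f$ and $h$ be the sequences defined in the context, and let $\varphi=(1+\sqrt5)/2$. Then: (a) $h$ is nondecreasing on $\mathbb{N}$. (b) $h(n)\le n$ for all $n\ge 0$. (c) $h(n+1)\in\{h(n),h(n)+1\}$ for all $n\ge 0$. (d) For all $n\ge 0$: $h(n+1)=h(n)$ if and only if $f(n+1)=h(n)$. (e) For all $n\ge 0$: $h(n+1)=h(n)+1$ if and only if $f(n+1)=h(n)+n+1$. (f) For all $n\ge 1$: $h(h(n))+h(n+1)=n+2$. (g) For all $n\ge 0$: $f(f(n))=n$. (h) For all $n\ge 1$: $h(h(n)+n)=n+1$. (i) For all $n\ge 1$: $h(n)=\lfloor n\varphi\rfloor-n+1$. (j) There are no three distinct integers $n_1<n_2<n_3$ in $\mathbb{N}$ with $h(n_1)=h(n_2)=h(n_3)$. (k) For all $n\ge 0$: $h(n+2)>h(n)$. (l) $h:\mathbb{N}\to\mathbb{N}$ is surjective. (m) $f:\mathbb{N}\to\mathbb{N}$ is surjective. (n) $f$ is injective. (o) For all $n\ge 6$: $h(n)\le n-2$. (p) For all $n\ge 0$: if $f(n+1)>h(n)$, then $f(j)>h(n)$ for every $j\ge n+1$. (q) There are no integers $k\ge 2$ and $\ell$ such that $f(k-1)=\ell$ and $f(k)=\ell+1$.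
   Context: $\mathbb{N}=\{0,1,2,\dots\}$. The sequence $f:\mathbb{N}\to\mathbb{N}$ is defined greedily: $f(0)=0$, and for $n\ge1$, $f(n)$ is the least natural number such that (i) $f(n)\notin\{f(0),f(1),\dots,f(n-1)\}$ and (ii) $\sum_{1\le i\le n} f(i)$ is divisible by $n$. The sequence $h:\mathbb{N}\to\mathbb{N}$ is defined by $h(0)=0$ and $h(n)=\frac1n\,(f(1)+\cdots+f(n))$ for $n\ge1$ (an integer by (ii)). The first values are $f=0,1,3,2,6,8,4,11,5,14,16,\dots$ and $h=0,1,2,2,3,4,4,5,5,6,7,\dots$. *)

(* Defs.v *)
From mathcomp Require Import all_boot.
From Stdlib Require Import Reals ZArith.

Set Implicit Arguments.
Unset Strict Implicit.
Unset Printing Implicit Defensive.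

(* Greedy step.  [s] is the list [f 0; ...; f (n-1)], n >= 1.
   [greedy_ok s n m] : m is not among f 0..f (n-1) and n divides
   f 1 + ... + f (n-1) + m. *)
Definition greedy_ok (s : seq nat) (n m : nat) : bool :=
  (m \notin s) && (n %| sumn (behead s) + m).

(* The search range [0, n*n + 2*n + 1) is
   sufficient: among the n+1 numbers r, r+n, ..., r+n*n (r < n the required
   residue), all satisfy the divisibility and at most n are in s, so one is
   free; hence the least valid m is < n*n + 2*n.  Since the search starts at 0,
   the first valid element found is the least natural number satisfying (i),(ii). *)
Definition greedy_next (s : seq nat) (n : nat) : nat :=
  nth 0 [seq m <- iota 0 (n * n + 2 * n + 1) | greedy_ok s n m] 0.

Fixpoint fseq (n : nat) : seq nat :=
  match n with
  | 0 => [:: 0]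
  | n'.+1 => let s := fseq n' in rcons s (greedy_next s n'.+1)
  end.

Definition f (n : nat) : nat := nth 0 (fseq n) n.

Definition h (n : nat) : nat :=
  if n == 0 then 0 else (\sum_(1 <= i < n.+1) f i) %/ n.

Definition phi : R := ((1 + sqrt 5) / 2)%R.

(* Main.v *)
From Pilot Require Import Defs.
From mathcomp Require Import all_boot.
From Stdlib Require Import Reals ZArith Lra Lia.
From mathcomp Require Import zify.
Import Pilot.Defs.
Set Implicit Arguments. Unset Strict Implicit. Unset Printing Implicit Defensive.
Open Scope R_scope.
Definition al : R := phi - 1.
Lemma s5 : sqrt 5 * sqrt 5 = 5.
Proof. apply sqrt_sqrt; lra. Qed.
Lemma s5pos : 0 <= sqrt 5.
Proof. apply sqrt_pos. Qed.
Lemma al_sq : al * al = 1 - al.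
Proof. unfold al, phi. have := s5. lra. Qed.
Lemma al_bnd : 0.6 < al < 0.625.
Proof. have := s5; have := s5pos; unfold al, phi => ??. nra. Qed.
Lemma aa x : x * al * al = x - x * al.
Proof. rewrite Rmult_assoc al_sq; ring. Qed.
Lemma phi_al : phi = 1 + al.
Proof. unfold al; lra. Qed.
Close Scope R_scope.
Lemma INR_addn a b : INR (a + b) = (INR a + INR b)%R.
Proof. exact: plus_INR. Qed.
Lemma INR_muln a b : INR (a * b) = (INR a * INR b)%R.
Proof. exact: mult_INR. Qed.
Lemma five_sq k g : 0 < k -> 5 * (k * k) <> g * g.
Proof.
move=> k0 E.
have g0 : 0 < g by case: g E; rewrite ?muln0 //; lia.
have := congr1 (logn 5) E.
rewrite lognM // ?lognM //; [|lia].
have -> : logn 5 5 = 1 by [].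
lia.
Qed.
Lemma al_irr k g : 0 < k -> (INR k * al)%R <> INR g.
Proof.
move=> k0 E.
have E1 : (INR k * sqrt 5 = INR g + INR g + INR k)%R by move: E; unfold al, phi; lra.
have E2 : (5 * (INR k * INR k) = (INR g + INR g + INR k) * (INR g + INR g + INR k))%R.
  rewrite -E1. have := s5. nra.
apply: (@five_sq k (g+g+k) k0).
apply: INR_eq. rewrite !INR_muln !INR_addn. rewrite -E2. simpl. lra.
Qed.
Definition G (n : nat) : nat := Z.to_nat (Int_part (INR n * al)).
Lemma Gspec n : (INR (G n) <= INR n * al < INR (G n) + 1)%R.
Proof.
have [H1 H2] := base_Int_part (INR n * al).
have p : (0 <= INR n * al)%R.
  have := pos_INR n; have := al_bnd; nra.
have z0 : (0 <= Int_part (INR n * al))%Z.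
  suff : (-1 < Int_part (INR n * al))%Z by lia.
  apply: lt_IZR. simpl. lra.
rewrite /G INR_IZR_INZ Z2Nat.id //. lra.
Qed.
Lemma INR_lt_S a b : (INR a < INR b + 1)%R -> a <= b.
Proof. rewrite -S_INR => /INR_lt /ltP. by []. Qed.
Lemma Guniq n g : (INR g <= INR n * al)%R -> (INR n * al < INR g + 1)%R -> G n = g.
Proof.
move=> h1 h2; have [s1 s2] := Gspec n.
have a1 : G n <= g by apply: INR_lt_S; lra.
have a2 : g <= G n by apply: INR_lt_S; lra.
lia.
Qed.
Lemma Gstrict n : 0 < n -> (INR (G n) < INR n * al)%R.
Proof.
move=> n0; have [s1 s2] := Gspec n.
case: (Rle_lt_or_eq_dec _ _ s1) => // E.
by case: (@al_irr n (G n) n0).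
Qed.
Lemma mA u v : (u < v)%R -> (u * al < v * al)%R.
Proof. have := al_bnd => ? ?; apply Rmult_lt_compat_r; lra. Qed.
Lemma mP u v : (u < v)%R -> (u * (1 + al) < v * (1 + al))%R.
Proof. have := al_bnd => ? ?; apply Rmult_lt_compat_r; lra. Qed.
Lemma mQ u v : (u < v)%R -> (u * (1 - al) < v * (1 - al))%R.
Proof. have := al_bnd => ? ?; apply Rmult_lt_compat_r; lra. Qed.
Lemma mQle u v : (u <= v)%R -> (u * (1 - al) <= v * (1 - al))%R.
Proof. have := al_bnd => ? ?; apply Rmult_le_compat_r; lra. Qed.
Lemma mAle u v : (u <= v)%R -> (u * al <= v * al)%R.
Proof. have := al_bnd => ? ?; apply Rmult_le_compat_r; lra. Qed.
Lemma mPle u v : (u <= v)%R -> (u * (1 + al) <= v * (1 + al))%R.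
Proof. have := al_bnd => ? ?; apply Rmult_le_compat_r; lra. Qed.
Lemma G0 : G 0 = 0.
Proof. apply: Guniq; simpl; have := al_bnd; lra. Qed.
Lemma G1 : G 1 = 0.
Proof. apply: Guniq; simpl; have := al_bnd; lra. Qed.
Lemma G2 : G 2 = 1.
Proof. apply: Guniq; simpl; have := al_bnd; lra. Qed.
Lemma Gmono m n : m <= n -> G m <= G n.
Proof.
move=> /leP mn. have := le_INR _ _ mn => le.
have := Gspec m; have := Gspec n; have := al_bnd => ???.
apply: INR_lt_S. have := mAle le. lra.
Qed.
Lemma GS n : G n.+1 = G n \/ G n.+1 = (G n).+1.
Proof.
have := Gspec n; have := Gspec n.+1; have := al_bnd; rewrite S_INR => ???.
have a1 : G n <= G n.+1 by apply: Gmono.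
have a2 : G n.+1 <= (G n).+1 by apply: INR_lt_S; rewrite S_INR; lra.
lia.
Qed.
Lemma GSS n : G n < G n.+2.
Proof.
have := Gspec n; have := Gspec n.+2; have := al_bnd; rewrite !S_INR => ???.
apply: INR_lt_S. rewrite S_INR. lra.
Qed.
Lemma G6 n : 6 <= n -> G n + 3 <= n.
Proof.
move=> /leP n6; have := le_INR _ _ n6 => le.
have := Gspec n; have := al_bnd => ??.
have ? : (INR n * al <= INR n * 0.625)%R by apply Rmult_le_compat_l; [apply pos_INR | lra].
apply: INR_lt_S. rewrite INR_addn. simpl in le |- *. lra.
Qed.
Lemma minus_INR' a b : b <= a -> INR (a - b) = (INR a - INR b)%R.
Proof. move=> /leP ba. exact: minus_INR. Qed.
Lemma nat_of_R a b : (INR a - 1 < INR b)%R -> (INR b < INR a + 1)%R -> a = b.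
Proof.
move=> h1 h2.
have : b <= a by apply: INR_lt_S.
have : a <= b by apply: INR_lt_S; lra.
lia.
Qed.

Lemma G4' k : 0 < k -> G k.+1 = (G k).+1 ->
  [/\ G (k + k + G k + 1) = G k + k, G (k + k + G k + 2) = G k + k + 1
    & G (k + k + G k + 3) = G k + k + 2].
Proof.
move=> k0 E.
have F1 := Gstrict k0. have [_ F2] := Gspec k.
have F3 := @Gstrict k.+1 isT. have [_ F4] := Gspec k.+1.
rewrite E !S_INR in F3 F4.
set m := G k in F1 F2 F3 F4 *.
have := mA F1; have := mP F1; have := mA F2; have := mP F2.
have := mA F3; have := mP F3; have := mA F4; have := mP F4.
have := mQ F1; have := mQ F2; have := mQ F3; have := mQ F4.
have := aa (INR k); have := aa (INR m); have := al_sq; have := al_bnd.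
move=> *.
split; apply: Guniq; rewrite !INR_addn /=; lra.
Qed.
Ltac ml H := first [ have := mA H; have := mP H; have := mQ H
                   | have := mAle H; have := mPle H; have := mQle H ].

Lemma G4 n : 3 <= n -> G n.-1 < G n -> G n < G n.+1 ->
  exists k, [/\ 0 < k, k < n, G k.+1 = (G k).+1 & G k + k + 1 = G n].
Proof.
case: n => [//|n] n3 E1 E2. rewrite /= in E1 *.
have e1 : G n.+1 = (G n).+1 by have := GS n; lia.
have e2 : G n.+2 = (G n.+1).+1 by have := GS n.+1; lia.
set g := G n.+1 in e1 e2 *.
have F1 : (INR n * al < INR g)%R by rewrite e1 S_INR; exact: (Gspec n).2.
have F2 := @Gstrict n.+1 isT. rewrite -/g in F2.
have F3 := @Gstrict n.+2 isT. rewrite e2 in F3.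
rewrite !S_INR in F1 F2 F3.
have bnd := al_bnd.
have l1 : g.+2 <= n.+1.
  have ? : (INR n * al <= INR n * 0.625)%R by apply Rmult_le_compat_l; [apply pos_INR | lra].
  have := le_INR 2 n (ltac:(apply/leP; lia)); simpl => ?.
  apply: INR_lt_S. rewrite !S_INR. lra.
have l2 : n.+1 <= g + g.
  have ? : (INR n * 0.6 <= INR n * al)%R by apply Rmult_le_compat_l; [apply pos_INR | lra].
  have := pos_INR n => ?.
  apply: INR_lt_S. rewrite INR_addn S_INR. lra.
exists (n.+1 - g - 1).
have Ek : n.+1 = (n.+1 - g - 1) + g + 1 by lia.
have Em : g + g = (g + g - n.+1) + n.+1 by lia.
set k := n.+1 - g - 1 in Ek *. set m := g + g - n.+1 in Em.
have R1 : INR n.+1 = (INR k + INR g + 1)%R by rewrite Ek !INR_addn.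
have R2 : (INR g + INR g = INR m + INR n.+1)%R by rewrite -!INR_addn Em.
rewrite S_INR in R1 R2.
have R1a := f_equal (fun x => x * al)%R R1. have R2a := f_equal (fun x => x * al)%R R2.
simpl in R1a, R2a.
ml F1; ml F2; ml F3. have := aa (INR k); have := aa (INR g); have := aa (INR m); have := aa (INR n).
have := al_sq. move=> *.
have Gk : G k = m by apply: Guniq; lra.
have Gk1 : G k.+1 = m.+1 by apply: Guniq; rewrite !S_INR; lra.
split; try lia.
Qed.
Lemma Gle n : G n <= n.
Proof.
apply: INR_lt_S. have := Gspec n; have := al_bnd; have := pos_INR n => ???.
have ? : (INR n * al <= INR n * 0.625)%R by apply Rmult_le_compat_l; [apply pos_INR | lra].
lra.
Qed.

Lemma Glt n : 0 < n -> G n < n.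
Proof.
move=> n0. have F := Gstrict n0.
have ? : (INR n * al <= INR n * 0.625)%R by have := al_bnd => ?; apply Rmult_le_compat_l; [apply pos_INR | lra].
have := lt_INR 0 n (elimT ltP n0); simpl => ?.
apply: INR_lt_S. rewrite S_INR. lra.
Qed.

Lemma Gf n : 0 < n -> G (G n + 1) + G n.+1 = n.
Proof.
move=> n0.
have yl : G n.+1 <= n by have := Glt n0; have := GS n; lia.
suff : G (G n + 1) = n - G n.+1 by lia.
have F1 := Gstrict n0. have [_ F2] := Gspec n.
have [_ F4] := Gspec n.+1. have F3 := @Gstrict n.+1 isT. rewrite S_INR in F3 F4.
have Ey := GS n.
set g := G n in F1 F2 Ey *. set y := G n.+1 in F3 F4 yl Ey *.
clearbody g y.
case: Ey => Ey; rewrite Ey ?S_INR in F3 F4 yl *;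
ml F1; ml F2; ml F3; ml F4; have := aa (INR n); have := aa (INR g);
have := al_sq; have := al_bnd; move=> *;
apply: Guniq; rewrite ?INR_addn ?minus_INR' // ?S_INR ?INR_1 ?INR_0; lra.
Qed.

Lemma Gh n : G (G n + n + 1) = n.
Proof.
have [F1 F2] := Gspec n.
set g := G n in F1 F2 *.
ml F1; ml F2. have := aa (INR n); have := aa (INR g).
have := al_sq; have := al_bnd; move=> *.
apply: Guniq; rewrite !INR_addn /=; lra.
Qed.

Lemma G7 n : 0 < n -> G n.+1 = G n -> G (G n).+1 = (G (G n)).+1 /\ G (G n) + G n + 1 = n.
Proof.
move=> n0 E.
have F1 := Gstrict n0. have [_ F2] := Gspec n.+1. rewrite E S_INR in F2.
set j := G n in F1 F2 E *.
have [F3 F4] := Gspec j. set m := G j in F3 F4 *. clearbody m j.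
ml F1; ml F2; ml F3; ml F4. have := aa (INR n); have := aa (INR j); have := aa (INR m).
have := al_sq; have := al_bnd; move=> *.
have En : m + j + 1 = n.
  apply: nat_of_R; rewrite !INR_addn /=; lra.
split=> //.
have Er : INR n = (INR m + INR j + 1)%R by rewrite -En !INR_addn /=; lra.
apply: Guniq; rewrite !S_INR; lra.
Qed.

Lemma G8 n : G n.+1 = (G n).+1 -> G (G n + n + 2) = n.
Proof.
move=> E.
have [F1 F2] := Gspec n. have F3 := @Gstrict n.+1 isT. rewrite E !S_INR in F3.
set g := G n in F1 F2 F3 *.
ml F1; ml F2; ml F3. have := aa (INR n); have := aa (INR g).
have := al_sq; have := al_bnd; move=> *.
apply: Guniq; rewrite !INR_addn /=; lra.
Qed.
Lemma IntG n : Int_part (INR n * phi) = Z.of_nat (n + G n).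
Proof.
rewrite /Int_part.
suff -> : up (INR n * phi) = (Z.of_nat (n + G n) + 1)%Z by lia.
symmetry; apply: tech_up; rewrite plus_IZR -INR_IZR_INZ INR_addn phi_al /=;
have := Gspec n; lra.
Qed.
Lemma size_fseq n : size (fseq n) = n.+1.
Proof. by elim: n => //= n IH; rewrite size_rcons IH. Qed.

Lemma nth_fseq n i : i <= n -> nth 0 (fseq n) i = f i.
Proof.
elim: n i => [|n IH] i; first by rewrite leqn0 => /eqP ->.
rewrite leq_eqVlt => /orP [/eqP -> //| lt].
by rewrite /= nth_rcons size_fseq lt IH.
Qed.

Lemma fseqE n : fseq n = mkseq f n.+1.
Proof.
apply: (@eq_from_nth _ 0); first by rewrite size_fseq size_mkseq.
move=> i; rewrite size_fseq => lt; rewrite nth_mkseq // nth_fseq //.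
Qed.

Lemma f0 : f 0 = 0.
Proof. by []. Qed.

Lemma fS n : f n.+1 = greedy_next (mkseq f n.+1) n.+1.
Proof. by rewrite /f /= nth_rcons size_fseq ltnn eqxx fseqE. Qed.

Lemma sumS n : sumn (behead (mkseq f n.+1)) = \sum_(1 <= i < n.+1) f i.
Proof. by rewrite /mkseq /= sumnE big_map /index_iota subSS subn0. Qed.

Lemma greedy_nextP s n m : m < n * n + 2 * n + 1 -> greedy_ok s n m ->
  (forall k, k < m -> ~~ greedy_ok s n k) -> greedy_next s n = m.
Proof.
move=> mb ok mn; rewrite /greedy_next.
have -> : n * n + 2 * n + 1 = m + (n * n + 2 * n + 1 - m) by rewrite subnKC // ltnW.
rewrite iotaD filter_cat add0n.
have -> : [seq x <- iota 0 m | greedy_ok s n x] = [::].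
  rewrite (@eq_in_filter _ _ pred0) ?filter_pred0 //.
  by move=> x; rewrite mem_iota add0n /= => /mn /negbTE.
rewrite /=. have -> : n * n + 2 * n + 1 - m = (n * n + 2 * n - m).+1 by lia.
by rewrite /= ok.
Qed.

Lemma mem_mkseq v n : reflect (exists2 i, i <= n & f i = v) (v \in mkseq f n.+1).
Proof.
apply: (iffP mapP) => [[i]|[i ii <-]].
  by rewrite mem_iota add0n => /andP [_ ii] ->; exists i.
by exists i => //; rewrite mem_iota add0n.
Qed.
Definition S n := \sum_(1 <= i < n.+1) f i.

Lemma cand n hh m : hh <= n -> n.+1 %| n * hh + m -> m < hh + n.+1 -> m = hh.
Proof.
move=> hn /dvdnP [q E] lt.
have : q <= hh by nia.
have : hh <= q by nia.
nia.
Qed.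

Lemma SS n : S n.+1 = S n + f n.+1.
Proof. by rewrite /S big_nat_recr. Qed.

Lemma step n : S n = n * h n -> h n <= n -> (forall i, i <= n -> f i <= h n + n) ->
  [/\ f n.+1 = (if h n \in mkseq f n.+1 then h n + n.+1 else h n),
      h n.+1 = h n + (h n \in mkseq f n.+1),
      S n.+1 = n.+1 * h n.+1, h n.+1 <= n.+1 &
      forall i, i <= n.+1 -> f i <= h n.+1 + n.+1].
Proof.
move=> Sn hn fb.
set s := mkseq f n.+1.
have okE m : greedy_ok s n.+1 m = (m \notin s) && (n.+1 %| n * h n + m).
  by rewrite /greedy_ok sumS -/(S n) Sn.
have fe : f n.+1 = (if h n \in s then h n + n.+1 else h n).
  rewrite fS -/s; case: ifP => hin; apply: greedy_nextP.
  - nia.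
  - rewrite okE; apply/andP; split.
      apply/negP => /mem_mkseq [i ii fi]. have := fb i ii. lia.
    have -> : n * h n + (h n + n.+1) = n.+1 * (h n).+1 by nia.
    exact: dvdn_mulr.
  - move=> k lt; rewrite okE; apply/negP => /andP [kn dv].
    have := cand hn dv lt => ek. by rewrite ek hin in kn.
  - nia.
  - rewrite okE hin /=. have -> : n * h n + h n = n.+1 * h n by nia.
    exact: dvdn_mulr.
  - move=> k lt; rewrite okE; apply/negP => /andP [kn dv].
    have := cand hn dv (ltn_addr _ lt) => ek. lia.
have he : h n.+1 = h n + (h n \in s).
  rewrite /h /= -/(S n.+1) SS Sn fe; case: ifP => _.
  - have -> : n * h n + (h n + n.+1) = (h n).+1 * n.+1 by nia.
    by rewrite mulnK // addn1.
  - have -> : n * h n + h n = h n * n.+1 by nia.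
    by rewrite mulnK // addn0.
split => //.
- rewrite SS Sn fe he; case: (h n \in s) => /=; nia.
- by rewrite he; case: (h n \in s) => /=; lia.
- move=> i; rewrite leq_eqVlt => /orP [/eqP ->|]; first by rewrite fe he; case: (h n \in s) => /=; lia.
  rewrite ltnS => /fb; rewrite he; lia.
Qed.

Lemma inv n : [/\ S n = n * h n, h n <= n & forall i, i <= n -> f i <= h n + n].
Proof.
elim: n => [|n [A B C]].
  split => //. by rewrite /S big_geq. by move=> i; rewrite leqn0 => /eqP ->.
by have [] := step A B C.
Qed.

Definition inc n := h n \in mkseq f n.+1.

Lemma fSE n : f n.+1 = if inc n then h n + n.+1 else h n.
Proof. by have [A B C] := inv n; have [] := step A B C. Qed.
Lemma hSE n : h n.+1 = h n + inc n.
Proof. by have [A B C] := inv n; have [] := step A B C. Qed.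
Lemma hle n : h n <= n.
Proof. by have [] := inv n. Qed.
Lemma incP n : reflect (exists2 i, i <= n & f i = h n) (inc n).
Proof. exact: mem_mkseq. Qed.
Lemma h0 : h 0 = 0. Proof. by []. Qed.
Lemma inc0 : inc 0.
Proof. by apply/incP; exists 0. Qed.
Lemma h1 : h 1 = 1.
Proof. by rewrite hSE inc0. Qed.
Lemma inc1 : inc 1.
Proof. apply/incP; exists 1 => //. by rewrite fSE inc0 h1. Qed.
Lemma h2 : h 2 = 2.
Proof. by rewrite hSE inc1 h1. Qed.
Lemma G3 : G 3 = 1.
Proof. apply: Guniq; simpl; have := al_bnd; lra. Qed.

Lemma hG_aux N : forall n, 0 < n <= N -> h n = (G n).+1.
Proof.
elim: N => [|N IH] n; first by lia.
case/andP => n0; rewrite leq_eqVlt => /orP [/eqP En|]; last by move=> ?; apply: IH; lia.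
subst n.
case: N IH n0 => [|[|n]] IH _; first by rewrite h1 G1.
  by rewrite h2 G2.
have IH' j : 0 < j <= n.+2 -> h j = (G j).+1 by move=> ?; apply: IH.
rewrite hSE (IH' n.+2 ltac:(lia)).
suff : G n.+3 = G n.+2 + inc n.+2 by lia.
case: (GS n.+1) => E1.
-
  have hs : h n.+2 = h n.+1 by rewrite (IH' n.+2 ltac:(lia)) (IH' n.+1 ltac:(lia)) E1.
  have i1 : inc n.+1 = false by move: (hSE n.+1); rewrite hs; lia.
  have -> : inc n.+2.
    apply/incP; exists n.+2 => //. by rewrite fSE i1 hs.
  have := GSS n.+1; have := GS n.+2; lia.
- set g := G n.+2.
  have g1 : 1 <= g by rewrite /g; have := Gmono (isT : 2 <= n.+2); rewrite G2.
  case: (GS n.+2) => E2.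
  + rewrite E2. suff : inc n.+2 = false by move=> ->; rewrite addn0.
    apply/negP => /incP [[|j]]; first by rewrite f0 (IH' n.+2 ltac:(lia)); lia.
    move=> jn; rewrite fSE. case ij : (inc j).
    * case: j jn ij => [|j] jn ij; first by rewrite h0 (IH' n.+2 ltac:(lia)); lia.
      rewrite (IH' j.+1 ltac:(lia)) (IH' n.+2 ltac:(lia)) => Ef.
      have Ej : G j.+2 = (G j.+1).+1.
        by move: (hSE j.+1); rewrite ij (IH' j.+1 ltac:(lia)) (IH' j.+2 ltac:(lia)); lia.
      have [A B C] := G4' (isT : 0 < j.+1) Ej.
      set n' := j.+1 + j.+1 + G j.+1 + 2 in B.
      have Eg : G j.+1 + j.+1 + 1 = g by rewrite /g; lia.
      have : n.+2 = n'.
        case: (ltngtP n.+2 n') => // c.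
        - have := @Gmono n.+2 (n'.-1) ltac:(lia).
          have -> : n'.-1 = j.+1 + j.+1 + G j.+1 + 1 by rewrite /n'; lia.
          rewrite A -/g; lia.
        - have := @Gmono n' n.+1 ltac:(lia). rewrite B; lia.
      move=> En. have : G n.+3 = G (j.+1 + j.+1 + G j.+1 + 3).
        by congr G; rewrite /n' in En; lia.
      rewrite C E2 -/g; lia.
    * have j0 : 0 < j by case: j jn ij => [|j] //; rewrite inc0.
      rewrite (IH' j ltac:(lia)) (IH' n.+2 ltac:(lia)).
      move=> Ef. have : G j = g by lia.
      have := @Gmono j n.+1 ltac:(lia). rewrite -/g; lia.
  + rewrite E2. suff -> : inc n.+2 by rewrite addn1.
    have n3 : 2 < n.+2 by move: E2; case: (posnP n) => [->|np]; [rewrite G3 G2 | lia].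
    have [k [k0 kn Ek Eg]] := G4 n3 ltac:(simpl; lia) ltac:(lia).
    apply/incP; exists k.+1; first by lia.
    have ik : inc k.
      by move: (hSE k); rewrite (IH' k ltac:(lia)) (IH' k.+1 ltac:(lia)); lia.
    rewrite fSE ik (IH' k ltac:(lia)) (IH' n.+2 ltac:(lia)). lia.
Qed.

Lemma hG n : 0 < n -> h n = (G n).+1.
Proof. by move=> n0; apply: (@hG_aux n); rewrite n0 leqnn. Qed.
Lemma hS01 n : h n.+1 = h n \/ h n.+1 = (h n).+1.
Proof. rewrite hSE; case: (inc n) => /=; lia. Qed.

Lemma hmono m n : m <= n -> h m <= h n.
Proof.
move=> mn; rewrite -(subnKC mn); elim: (n - m) => [|k IH]; first by rewrite addn0.
rewrite addnS hSE; lia.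
Qed.

Lemma incSS n : inc n = false -> inc n.+1.
Proof.
move=> i; apply/incP; exists n.+1 => //. by rewrite fSE i hSE i addn0.
Qed.

Lemma hk n : h n < h n.+2.
Proof.
case i : (inc n).
- have := hSE n; have := hSE n.+1; rewrite i; lia.
- have := hSE n; have := hSE n.+1; rewrite i incSS //; lia.
Qed.

Lemma ff n : f (f n) = n.
Proof.
case: n => [//|p]. rewrite (fSE p). case ip : (inc p).
- case: p ip => [|p] ip; first by rewrite h0 fSE inc0 h0.
  have hp := hG (isT : 0 < p.+1).
  have Ginc : G p.+2 = (G p.+1).+1.
    by move: (hSE p.+1); rewrite ip hp hG //; lia.
  have E8 := G8 Ginc. have E6 := Gh p.+1.
  set N := G p.+1 + p.+1 + 1 in E6.
  have -> : h p.+1 + p.+2 = N.+1 by rewrite hp /N; lia.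
  have N0 : 0 < N by rewrite /N; lia.
  have hN : h N = p.+2 by rewrite hG // E6.
  have EN : N.+1 = G p.+1 + p.+1 + 2 by rewrite /N; lia.
  have hN1 : h N.+1 = p.+2 by rewrite hG // EN E8.
  have iN : inc N = false by move: (hSE N); rewrite hN hN1; lia.
  by rewrite fSE iN hN.
- case: p ip => [|p] ip; first by rewrite inc0 in ip.
  have hp := hG (isT : 0 < p.+1).
  have Gs : G p.+2 = G p.+1.
    by move: (hSE p.+1); rewrite ip hp hG //; lia.
  have [A B] := G7 (isT : 0 < p.+1) Gs.
  set j := G p.+1 in A B hp.
  have j0 : 0 < j.
    case: (posnP j) => // j0. have p0 : p = 0 by move: B; rewrite j0 G0; lia.
    by move: Gs; rewrite p0 G2 G1.
  have hj := hG j0. have hj1 := hG (isT : 0 < j.+1).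
  have ij : inc j by move: (hSE j); rewrite hj hj1 A; lia.
  by rewrite hp fSE ij hj; lia.
Qed.

Lemma finj : injective f.
Proof. by move=> a b E; rewrite -(ff a) E ff. Qed.

Theorem theorem2 :
  (* (a) *) (forall m n : nat, m <= n -> h m <= h n) /\
  (* (b) *) (forall n : nat, h n <= n) /\
  (* (c) *) (forall n : nat, h n.+1 = h n \/ h n.+1 = (h n).+1) /\
  (* (d) *) (forall n : nat, h n.+1 = h n <-> f n.+1 = h n) /\
  (* (e) *) (forall n : nat, h n.+1 = (h n).+1 <-> f n.+1 = h n + n.+1) /\
  (* (f) *) (forall n : nat, 1 <= n -> h (h n) + h n.+1 = n + 2) /\
  (* (g) *) (forall n : nat, f (f n) = n) /\
  (* (h) *) (forall n : nat, 1 <= n -> h (h n + n) = n.+1) /\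
  (* (i) *) (forall n : nat, 1 <= n ->
               Z.of_nat (h n) = (Int_part (INR n * phi) - Z.of_nat n + 1)%Z) /\
  (* (j) *) ~ (exists n1 n2 n3 : nat,
                 n1 < n2 < n3 /\ h n1 = h n2 /\ h n2 = h n3) /\
  (* (k) *) (forall n : nat, h n < h n.+2) /\
  (* (l) *) (forall m : nat, exists n : nat, h n = m) /\
  (* (m) *) (forall m : nat, exists n : nat, f n = m) /\
  (* (n) *) injective f /\
  (* (o) *) (forall n : nat, 6 <= n -> h n <= n - 2) /\
  (* (p) *) (forall n : nat, h n < f n.+1 -> forall j : nat, n.+1 <= j -> h n < f j) /\
  (* (q) *) ~ (exists k l : nat, 2 <= k /\ f k.-1 = l /\ f k = l.+1).
Proof.
split; first exact: hmono.
split; first exact: hle.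
split; first exact: hS01.
split.
  move=> n; rewrite fSE hSE; case: (inc n) => /=; lia.
split.
  move=> n; rewrite fSE hSE; case: (inc n) => /=; lia.
split.
  move=> n n0. have hn := hG n0. rewrite hn hG // hG //. move: (Gf n0); rewrite addn1 => E. by rewrite addSn addnS E addn2.
split; first exact: ff.
split.
  move=> n n0. have hn := hG n0.
  have -> : h n + n = G n + n + 1 by lia.
  by rewrite hG ?Gh //; lia.
split.
  move=> n n0. rewrite hG // IntG. lia.
split.
  case=> n1 [n2 [n3 [/andP [a b] [c d]]]].
  have := hk n1; have := @hmono n1.+2 n3 ltac:(lia). lia.
split; first exact: hk.
split.
  elim=> [|m [n hn]]; first by exists 0.
  case: (hS01 n) => e; last by exists n.+1; lia.
  exists n.+2. have := hk n; have := hS01 n.+1. lia.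
split.
  by move=> m; exists (f m); rewrite ff.
split; first exact: finj.
split.
  move=> n n6. rewrite hG; last by lia. have := G6 n6. lia.
split.
  move=> n lt j nj.
  have i : inc n by move: lt; rewrite fSE; case: (inc n) => //; lia.
  case/incP: i => i ii fi.
  case: j nj => [//|q] nq.
  have ne : f q.+1 <> h n by move=> e; have := finj (etrans e (esym fi)); lia.
  have := @hmono n q nq. move: ne; rewrite fSE; case: (inc q); lia.
case=> k [l [k2 [e1 e2]]].
case: k k2 e1 e2 => [|[|n]] // _ /= e1 e2.
move: e1 e2; rewrite (fSE n) (fSE n.+1) (hSE n).
case i1 : (inc n); case i2 : (inc n.+1) => /=; try lia.
Qed.
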